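(* Let $G$ be a graph with at least one isolated vertex such that $G\ne\widetilde G$ (i.e., $G$ has a pair of distinct twins). Then for every $t\ge 1$, \[\mu_t(\widetilde G)\cong \widetilde{\mu_t(G)}+(t-1)K_1.\]
   Context: All graphs are finite and simple. For a graph $G$ with $V(G)=\{v_1,\dots,v_n\}$ and an integer $t\ge1$, the generalized Mycielskian $\mu_t(G)$ has vertex set $\{u_i^s: 1\le i\le n,\ 0\le s\le t\}\cup\{w\}$, where $u_i^0$ is identified with $v_i$. Its edges are: $u_i^0u_j^0$ for each edge $v_iv_j$ of $G$; $u_i^su_j^{s+1}$ and $u_j^su_i^{s+1}$ for each edge $v_iv_j$ of $G$ and each $0\le s<t$; and $u_i^tw$ for all $1\le i\le n$. Two vertices are twins if they have the same open neighborhood; being twins is an equivalence relation $\sim$ on $V(G)$. The twin quotient $\widetilde G$ has as vertices the equivalence classes $[x]$ of $\sim$, with $[x]$ adjacent to $[z]$ iff some $p\in[x]$ and $q\in[z]$ are adjacent in $G$. $+$ denotes disjoint union and $(t-1)K_1$ denotes $t-1$ isolated vertices. *)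

(* Defs.v *)
(* Finite simple graphs as symmetric irreflexive relations on a finType. *)
From mathcomp Require Import all_boot.
Set Implicit Arguments. Unset Strict Implicit. Unset Printing Implicit Defensive.

Definition graph_iso (A B : finType) (eA : rel A) (eB : rel B) : Prop :=
  exists f : A -> B, bijective f /\ forall x y, eB (f x) (f y) = eA x y.

Definition nbhd (T : finType) (e : rel T) (x : T) : {set T} := [set y | e x y].

Definition twins (T : finType) (e : rel T) (x y : T) : bool := nbhd e x == nbhd e y.

Definition twin_class (T : finType) (e : rel T) (x : T) : {set T} :=
  [set y | twins e x y].

Definition is_twin_class (T : finType) (e : rel T) (A : {set T}) : bool :=
  [exists x, A == twin_class e x].

Definition twinq (T : finType) (e : rel T) : finType := {A : {set T} | is_twin_class e A}.

Definition twinq_rel (T : finType) (e : rel T) : rel (twinq e) :=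
  fun A B => [exists p in val A, exists q in val B, e p q].

(* Generalized Mycielskian mu_t(G): vertices u_i^s = Some (v_i, s), s <= t, and w = None. *)
Definition myc (T : finType) (t : nat) : finType := option (T * 'I_t.+1).

Definition myc_rel (T : finType) (e : rel T) (t : nat) : rel (myc T t) :=
  fun a b =>
    match a, b with
    | Some (i, s), Some (j, s') =>
        e i j && [|| (val s == 0) && (val s' == 0),
                     val s' == (val s).+1 | val s == (val s').+1]
    | Some (_, s), None => val s == t
    | None, Some (_, s') => val s' == t
    | None, None => false
    end.

Definition add_isolated (T : finType) (e : rel T) (k : nat) : rel (T + 'I_k)%type :=
  fun a b =>
    match a, b with
    | inl x, inl y => e x y
    | _, _ => false
    end.

Arguments twinq_rel {T} e _ _.
Arguments myc_rel {T} e t _ _.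
Arguments add_isolated {T} e k _ _.

(* Main.v *)
Require Import Defs.
From mathcomp Require Import all_boot.
From mathcomp Require Import zify.
Set Implicit Arguments. Unset Strict Implicit. Unset Printing Implicit Defensive.

Lemma twinsP (U : finType) (r : rel U) x y :
  reflect (forall z, r x z = r y z) (twins r x y).
Proof.
apply: (iffP eqP) => [H z | H].
- by have := congr1 (fun S : {set U} => z \in S) H; rewrite /nbhd !inE.
- by apply/setP => z; rewrite /nbhd !inE.
Qed.

Lemma twins_refl (U : finType) (r : rel U) x : twins r x x.
Proof. by apply/twinsP. Qed.

Lemma twins_sym (U : finType) (r : rel U) x y : twins r x y -> twins r y x.
Proof. by move/twinsP => H; apply/twinsP => z; rewrite H. Qed.

Lemma twins_trans (U : finType) (r : rel U) x y z :
  twins r x y -> twins r y z -> twins r x z.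
Proof. by move/twinsP => H1 /twinsP H2; apply/twinsP => w; rewrite H1 H2. Qed.

Lemma in_twin_class (U : finType) (r : rel U) x y :
  (y \in twin_class r x) = twins r x y.
Proof. by rewrite inE. Qed.

Lemma cls_proof (U : finType) (r : rel U) x : is_twin_class r (twin_class r x).
Proof. by apply/existsP; exists x. Qed.

Definition cls (U : finType) (r : rel U) (x : U) : twinq r :=
  @exist _ _ (twin_class r x) (cls_proof r x).

Definition rep (U : finType) (r : rel U) (A : twinq r) : U :=
  xchoose (existsP (svalP A)).

Lemma cls_rep (U : finType) (r : rel U) (A : twinq r) : cls r (rep A) = A.
Proof.
apply: val_inj => /=; symmetry; apply/eqP.
exact: (xchooseP (existsP (svalP A))).
Qed.

Lemma cls_eq (U : finType) (r : rel U) x y :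
  cls r x = cls r y <-> twins r x y.
Proof.
split => [H | H].
- move/(congr1 val): H => /= H.
  have : y \in twin_class r y by rewrite in_twin_class twins_refl.
  by rewrite -H in_twin_class.
- apply: val_inj => /=; apply/setP => z; rewrite !in_twin_class.
  apply/idP/idP => Hz; [exact: twins_trans (twins_sym H) Hz | exact: twins_trans H Hz].
Qed.

Lemma twins_rep_cls (U : finType) (r : rel U) x : twins r (rep (cls r x)) x.
Proof. by apply/cls_eq; rewrite cls_rep. Qed.

Lemma twinq_rel_cls (U : finType) (r : rel U) (rs : symmetric r) x y :
  twinq_rel r (cls r x) (cls r y) = r x y.
Proof.
apply/idP/idP.
- case/existsP => p /andP [] /= Hp /existsP [q /andP [] /= Hq Hpq].
  rewrite in_twin_class in Hp; rewrite in_twin_class in Hq.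
  move/twinsP: Hp => Hp; move/twinsP: Hq => Hq.
  have h1 : r x q by rewrite Hp.
  have h2 : r y x by rewrite Hq rs.
  by rewrite rs.
- move=> Hxy; apply/existsP; exists x; rewrite /= in_twin_class twins_refl /=.
  by apply/existsP; exists y; rewrite in_twin_class twins_refl.
Qed.

Lemma twinq_rel_rep (U : finType) (r : rel U) (rs : symmetric r) (A B : twinq r) :
  twinq_rel r A B = r (rep A) (rep B).
Proof. by rewrite -{1}(cls_rep A) -{1}(cls_rep B) twinq_rel_cls. Qed.

Lemma twinq_sym (U : finType) (r : rel U) (rs : symmetric r) : symmetric (twinq_rel r).
Proof. by move=> A B; rewrite !twinq_rel_rep // rs. Qed.

Lemma myc_sym (U : finType) (e : rel U) (es : symmetric e) t : symmetric (myc_rel e t).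
Proof.
move=> [[i s]|] [[j s']|] //=. rewrite es; congr (_ && _). lia.
Qed.



Definition gmap (T : finType) (e : rel T) t (a : myc (twinq e) t) : myc T t :=
  if a is Some (A, s) then Some (rep A, s) else None.

Definition isoC (T : finType) (e : rel T) (A : twinq e) : bool := [forall y, ~~ e (rep A) y].

Definition low (T : finType) (e : rel T) t (a : myc (twinq e) t) : bool :=
  if a is Some (A, s) then isoC A && (0 < val s) && (val s < t) else false.

Definition lowidx (T : finType) (e : rel T) t (a : myc (twinq e) t) : nat :=
  if a is Some (_, s) then (val s).-1 else 0.

Definition fmap (T : finType) (e : rel T) t (a : myc (twinq e) t)
  : (twinq (myc_rel e t) + 'I_t.-1)%type :=
  if low a then oapp inr (inl (cls _ (gmap a))) (insub (lowidx a) : option 'I_t.-1)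
  else inl (cls _ (gmap a)).

Lemma F1 (T : finType) (e : rel T) t (a : myc (twinq e) t) :
  low a -> exists i, fmap a = inr i /\ val i = lowidx a.
Proof.
move=> La; rewrite /fmap La.
case: insubP => [i Hi Hv | Hn]; first by exists i.
exfalso; move: Hn La; case: a => [[A s]|] //= Hn /andP [] /andP [] _ H1 H2.
move/negP: Hn; apply; lia.
Qed.

Lemma F2 (T : finType) (e : rel T) t (a : myc (twinq e) t) :
  ~~ low a -> fmap a = inl (cls _ (gmap a)).
Proof. by move=> La; rewrite /fmap (negbTE La). Qed.

Lemma F3 (T : finType) (e : rel T) (es : symmetric e) t (a : myc (twinq e) t) :
  low a -> forall b, myc_rel (twinq_rel e) t a b = false.
Proof.
case: a => [[A s]|] //= /andP [] /andP [] /forallP HA H1 H2 [[B s']|] /=.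
- by rewrite twinq_rel_rep // (negbTE (HA _)).
- apply/negbTE; lia.
Qed.

Lemma F4 (T : finType) (e : rel T) (es : symmetric e) t (a b : myc (twinq e) t) :
  myc_rel (twinq_rel e) t a b = myc_rel e t (gmap a) (gmap b).
Proof.
case: a => [[A s]|]; case: b => [[B s']|] //=.
by rewrite twinq_rel_rep.
Qed.

Lemma myc_lift (T : finType) (e : rel T) t x x' (s : 'I_t.+1) :
  twins e x' x -> twins (myc_rel e t) (Some (x', s)) (Some (x, s)).
Proof.
move/twinsP => H; apply/twinsP => [[[j l]|]] //=.
by rewrite H.
Qed.

Lemma myc_iso (T : finType) (e : rel T) t x (s : 'I_t.+1) :
  (forall y, ~~ e x y) -> nat_of_ord s < t -> forall z, myc_rel e t (Some (x, s)) z = false.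
Proof.
move=> Hx Hs [[j l]|] /=; first by rewrite (negbTE (Hx j)).
by rewrite ltn_eqF.
Qed.

Lemma L1 (T : finType) (e : rel T) t (t_ge1 : 1 <= t) x y (s s' : 'I_t.+1) k :
  twins (myc_rel e t) (Some (x, s)) (Some (y, s')) -> e x k ->
  s = s' /\ twins e x y.
Proof.
move/twinsP => H Hk.
have Hsl := ltn_ord s; have Hs'l := ltn_ord s'.
have HN := H None; rewrite /= in HN.
have Hl : forall z n, n <= t ->
    e x z && [|| (nat_of_ord s == 0) && (n == 0), n == (nat_of_ord s).+1 | nat_of_ord s == n.+1]
    = e y z && [|| (nat_of_ord s' == 0) && (n == 0), n == (nat_of_ord s').+1 | nat_of_ord s' == n.+1].
  move=> z n Hn; have := H (Some (z, inord n)); rewrite /= inordK //; lia.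
have Hss : nat_of_ord s = nat_of_ord s'.
  case: (ltnP (nat_of_ord s) t) => Hst.
  - have := Hl k (nat_of_ord s).+1 Hst; rewrite Hk /=.
    case: (boolP (nat_of_ord s' == (nat_of_ord s).+2)) => Hs2.
    + case: (ltnP (nat_of_ord s') t) => Hs't.
      * have := Hl k (nat_of_ord s').+1 Hs't; rewrite Hk /=.
        move/eqP: Hs2 => Hs2; rewrite Hs2.
        case: (e y k) => /=; lia.
      * move=> _; move: HN; lia.
    + case: (e y k) => /=; move: HN Hs2; lia.
  - have := ltn_ord s; move: HN; lia.
have Hso : s = s' by apply: val_inj.
split => //.
apply/twinsP => z.
have Hs0 : (if nat_of_ord s < t then (nat_of_ord s).+1 else (nat_of_ord s).-1) <= t.
  case: ifP => ?; [lia | have := ltn_ord s; lia].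
have := Hl z _ Hs0; rewrite -Hss.
have -> : [|| (nat_of_ord s == 0) && ((if nat_of_ord s < t then (nat_of_ord s).+1 else (nat_of_ord s).-1) == 0),
    (if nat_of_ord s < t then (nat_of_ord s).+1 else (nat_of_ord s).-1) == (nat_of_ord s).+1
  | nat_of_ord s == (if nat_of_ord s < t then (nat_of_ord s).+1 else (nat_of_ord s).-1).+1] = true.
  case: ifP => ?; first lia.
  have := ltn_ord s; lia.
by rewrite !andbT.
Qed.

Lemma none_some (T : finType) (e : rel T) (es : symmetric e) (t : nat) (z0 : T)
    (Hz0 : forall y, ~~ e z0 y) y (s : 'I_t.+1) :
  ~~ twins (myc_rel e t) None (Some (y, s)).
Proof.
apply/negP => /twinsP /(_ (Some (z0, ord_max))) /=.
by rewrite eqxx es (negbTE (Hz0 y)).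
Qed.

Lemma Mlem (T : finType) (e : rel T) (es : symmetric e) t (t_ge1 : 1 <= t) z0
    (Hz0 : forall y, ~~ e z0 y) (a b : myc (twinq e) t) :
  ~~ low a -> ~~ low b -> twins (myc_rel e t) (gmap a) (gmap b) -> a = b.
Proof.
case: a => [[A s]|]; case: b => [[B s']|] //= La Lb Htw.
- set x := rep A in Htw La; set y := rep B in Htw Lb.
  have HAB : twins e x y -> A = B.
    by move/cls_eq; rewrite /x /y !cls_rep.
  case: (pickP (e x)) => [k Hk | Hnx].
    have [-> /HAB ->] := L1 t_ge1 Htw Hk; done.
  case: (pickP (e y)) => [k Hk | Hny].
    have [-> /twins_sym /HAB ->] := L1 t_ge1 (twins_sym Htw) Hk; done.
  have Hxy : twins e x y by apply/twinsP => z; rewrite Hnx Hny.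
  rewrite -(HAB Hxy) in Lb *.
  have HiA : isoC A by apply/forallP => z; rewrite Hnx.
  rewrite HiA /= in La Lb.
  move/twinsP: (Htw) => /(_ None) /=.
  have Hsl := ltn_ord s; have Hs'l := ltn_ord s'.
  move=> HN; have Hss : nat_of_ord s = nat_of_ord s' by move: La Lb HN; lia.
  by rewrite (val_inj Hss).
- by case/negP: (@none_some _ _ es _ _ Hz0 (rep A) s); exact: twins_sym.
- by case/negP: (@none_some _ _ es _ _ Hz0 (rep B) s').
Qed.

Lemma edge_pres (T : finType) (e : rel T) (es : symmetric e) t (a b : myc (twinq e) t) :
  add_isolated (twinq_rel (myc_rel e t)) t.-1 (fmap a) (fmap b)
  = myc_rel (twinq_rel e) t a b.
Proof.
case: (boolP (low a)) => La.
  have [i [-> _]] := F1 La.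
  by rewrite (F3 es La).
case: (boolP (low b)) => Lb.
  have [i [-> _]] := F1 Lb.
  rewrite myc_sym; last exact: twinq_sym.
  by rewrite (F3 es Lb); case: (fmap a).
rewrite (F2 La) (F2 Lb) /= twinq_rel_cls; last exact: myc_sym.
by rewrite F4.
Qed.

Lemma fmap_inj (T : finType) (e : rel T) (es : symmetric e) t (t_ge1 : 1 <= t) z0
    (Hz0 : forall y, ~~ e z0 y) : injective (@fmap T e t).
Proof.
move=> a b Hab.
case: (boolP (low a)) => La; case: (boolP (low b)) => Lb.
- have [i [Hi Hiv]] := F1 La; have [j [Hj Hjv]] := F1 Lb.
  move: Hab; rewrite Hi Hj => [[Hij]]; rewrite Hij Hjv in Hiv; clear Hjv.
  clear Hi Hj; move: La Lb Hiv; case: a => [[A s]|]; case: b => [[B s']|] //=.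
  move=> /andP [] /andP [] HA H1 H2 /andP [] /andP [] HB H3 H4 Hv.
  have Hss : s = s' by apply: val_inj => /=; lia.
  have HAB : A = B.
    rewrite -(cls_rep A) -(cls_rep B); apply/cls_eq; apply/twinsP => z.
    by move/forallP: HA => HA; move/forallP: HB => HB; rewrite (negbTE (HA z)) (negbTE (HB z)).
  by rewrite Hss HAB.
- have [i [Hi _]] := F1 La; by rewrite Hi (F2 Lb) in Hab.
- have [i [Hi _]] := F1 Lb; by rewrite Hi (F2 La) in Hab.
- move: Hab; rewrite (F2 La) (F2 Lb) => [[Hc]]; have Hc2 : cls (myc_rel e t) (gmap a) = cls (myc_rel e t) (gmap b) by apply: val_inj.
  have Htw := (cls_eq _ _ _).1 Hc2.
  exact: (Mlem es t_ge1 Hz0 La Lb Htw).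
Qed.

Lemma fmap_surj (T : finType) (e : rel T) (es : symmetric e) t (t_ge1 : 1 <= t) z0
    (Hz0 : forall y, ~~ e z0 y) X : exists a, @fmap T e t a = X.
Proof.
case: X => [X | i].
- rewrite -(cls_rep X); case: (rep X) => [[x s]|]; last first.
    by exists None; rewrite (@F2 _ _ _ None).
  case: (boolP (low (Some (cls e x, s) : myc (twinq e) t))) => L.
  + exists (Some (cls e x, ord0)).
    rewrite F2; last by rewrite /= andbF.
    suff -> : cls (myc_rel e t) (Some (rep (cls e x), ord0)) = cls (myc_rel e t) (Some (x, s)) by [].
    apply/cls_eq/twinsP => z.
    move: L => /= /andP [] /andP [] /forallP Hi H1 H2.
    have Hx : forall y, ~~ e x y.
      by move=> y; have := Hi y; move/twinsP: (twins_rep_cls e x) => ->.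
    case: z => [[j l]|] /=; first by rewrite (negbTE (Hi j)) (negbTE (Hx j)).
    by rewrite ltn_eqF // eq_sym gtn_eqF.
  + exists (Some (cls e x, s)); rewrite F2 //=.
    suff -> : cls (myc_rel e t) (Some (rep (cls e x), s)) = cls (myc_rel e t) (Some (x, s)) by [].
    apply/cls_eq.
    exact: myc_lift (twins_rep_cls e x).
- have Hi := ltn_ord i.
  have Hi1 : i.+1 < t.+1 by lia.
  have HL : low (Some (cls e z0, inord i.+1) : myc (twinq e) t).
    rewrite /= inordK //.
    have -> : isoC (cls e z0).
      by apply/forallP => y; move/twinsP: (twins_rep_cls e z0) => ->.
    rewrite /=; lia.
  exists (Some (cls e z0, inord i.+1)).
  have [j [Hj Hjv]] := F1 HL; rewrite Hj; suff -> : j = i by [];  apply: val_inj.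
  by rewrite Hjv /= inordK.
Qed.

Theorem mainTheorem5 (T : finType) (e : rel T) (e_sym : symmetric e) (e_irr : irreflexive e)
    (iso_v : exists x : T, forall y : T, ~~ e x y)
    (has_twins : exists x y : T, x != y /\ twins e x y)
    (t : nat) (t_ge1 : 1 <= t) :
  graph_iso (myc_rel (twinq_rel e) t)
            (add_isolated (twinq_rel (myc_rel e t)) t.-1).
Proof.
have [z0 Hz0] := iso_v.
exists (@fmap T e t); split; last by move=> x y; rewrite edge_pres.
pose g X := odflt None [pick a | @fmap T e t a == X].
exists g.
- move=> a; rewrite /g; case: pickP => [a' /eqP H | H] /=.
    exact: (fmap_inj e_sym t_ge1 Hz0 H).
  by have := H a; rewrite eqxx.
- move=> X; rewrite /g; case: pickP => [a' /eqP H | H] //=.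
  have [a Ha] := fmap_surj e_sym t_ge1 Hz0 X.
  by have := H a; rewrite Ha eqxx.
Qed.
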